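(* Let $D\ge1$, let $Q_D$ be the $D$-dimensional hypercube on $X=\{0,1\}^D$ with adjacency matrix $A$, and let $E_0V$ be the eigenspace of $A$ in $V=\mathbb{R}^X$ for the eigenvalue $D$. Then $BE_0V=0$ for every antisymmetric $A$-like matrix $B$.
   Context: $Q_D$ is the graph with vertex set $X=\{0,1\}^D$, two vertices adjacent iff they differ in exactly one coordinate. Matrices are real with rows and columns indexed by $X$ and act on $V=\mathbb{R}^X$. A matrix $B$ is $A$-like if $BA=AB$ and $B_{xy}=0$ for all $x,y\in X$ that are neither equal nor adjacent; it is antisymmetric if $B^t=-B$. *)

(* Defs.v *)
From mathcomp Require Import all_boot all_order all_algebra.
From mathcomp Require Import reals.
Set Implicit Arguments. Unset Strict Implicit. Unset Printing Implicit Defensive.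
Import Order.TTheory GRing.Theory Num.Theory.
Local Open Scope ring_scope.

Definition cube (D : nat) : finType := {ffun 'I_D -> bool}.

Definition hdist (D : nat) (x y : cube D) : nat := #|[set i | x i != y i]|.

Definition cube_adj (D : nat) (x y : cube D) : bool := hdist x y == 1%N.

Definition cmat (R : realType) (D : nat) := cube D -> cube D -> R.
Definition cvec (R : realType) (D : nat) := cube D -> R.

Definition adjA (R : realType) (D : nat) : cmat R D :=
  fun x y => if cube_adj x y then 1 else 0.

Definition cmul (R : realType) (D : nat) (M N : cmat R D) : cmat R D :=
  fun x z => \sum_(y : cube D) M x y * N y z.

Definition capply (R : realType) (D : nat) (M : cmat R D) (v : cvec R D) : cvec R D :=
  fun x => \sum_(y : cube D) M x y * v y.

Arguments adjA : clear implicits.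
Arguments cmul {R D} M N x z.
Arguments capply {R D} M v x.

Definition A_like (R : realType) (D : nat) (B : cmat R D) : Prop :=
  cmul B (adjA R D) = cmul (adjA R D) B /\
  forall x y : cube D, x != y -> ~~ cube_adj x y -> B x y = 0.

Definition antisym (R : realType) (D : nat) (B : cmat R D) : Prop :=
  forall x y : cube D, B y x = - B x y.

Arguments A_like {R D} B.
Arguments antisym {R D} B.

Definition in_E0 (R : realType) (D : nat) (v : cvec R D) : Prop :=
  capply (adjA R D) v = fun x => D%:R * v x.
Arguments in_E0 {R D} v.

(* Main.v *)
Require Import Defs.
From mathcomp Require Import all_boot all_order all_algebra.
From mathcomp Require Import reals.
Set Implicit Arguments. Unset Strict Implicit. Unset Printing Implicit Defensive.
Import Order.TTheory GRing.Theory Num.Theory.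
Local Open Scope ring_scope.

Definition flip (D : nat) (x : cube D) (i : 'I_D) : cube D :=
  [ffun j => if j == i then ~~ x j else x j].

Lemma flipK D (x : cube D) i : flip (flip x i) i = x.
Proof. apply/ffunP => j; rewrite !ffunE; case: eqP => //= _; by case: (x j). Qed.

Lemma flip_eq D (x y : cube D) i :
  (y == flip x i) = ([set j | x j != y j] == [set i]).
Proof.
apply/eqP/eqP => [->|H].
  apply/setP => j; rewrite !inE ffunE; case: (j == i); case: (x j) => //.
apply/ffunP => j; rewrite ffunE.
move/setP: H => /(_ j); rewrite !inE.
case: (j == i); case: (x j); case: (y j) => //=.
Qed.

Lemma adj_flip D (x y : cube D) : cube_adj x y -> exists i, y = flip x i.
Proof.
rewrite /cube_adj /hdist => /cards1P [i Hi]; exists i; apply/eqP.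
by rewrite flip_eq Hi.
Qed.

Lemma adjA_sum (R : realType) D (x : cube D) (f : cube D -> R) :
  \sum_y adjA R D x y * f y = \sum_i f (flip x i).
Proof.
have E : forall i, f (flip x i) = \sum_y (y == flip x i)%:R * f y.
  move=> i; rewrite (bigD1 (flip x i)) //= eqxx mul1r big1 ?addr0 //.
  by move=> y /negbTE ->; rewrite mul0r.
under [RHS]eq_bigr do rewrite E.
rewrite exchange_big /=; apply: eq_bigr => y _.
rewrite -mulr_suml; congr (_ * _).
rewrite -natr_sum.
have -> : (\sum_(i < D) (y == flip x i) = cube_adj x y :> nat)%N.
  under eq_bigr do rewrite flip_eq.
  rewrite /cube_adj /hdist.
  case: (boolP (#|[set j | x j != y j]| == 1%N)) => [H1|Hn].
    case/cards1P: H1 => i0 Hi0.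
    rewrite Hi0 (bigD1 i0) //= eqxx big1 //= => i Hi.
    have /negbTE -> // : [set i0] != [set i].
    by apply/eqP => /setP/(_ i); rewrite !inE eqxx (negbTE Hi).
  rewrite big1 //= => i.
  case: eqP => // He; move: Hn; by rewrite He cards1.
by rewrite /adjA; case: cube_adj.
Qed.

From mathcomp Require Import lra.
From Stdlib Require Import FunctionalExtensionality.

Lemma E0_edge (R : realType) D (w : cvec R D) : in_E0 w ->
  forall x i, w (flip x i) = w x.
Proof.
move=> hw.
have hE : forall x, \sum_i w (flip x i) = D%:R * w x.
  by move=> x; rewrite -adjA_sum; have := congr1 (fun g => g x) hw.
have inj : forall i, injective (fun x : cube D => flip x i).
  by move=> i; apply: (@can_inj _ _ _ (fun x => flip x i)) => y; apply: flipK.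
have e1 : \sum_x \sum_(i < D) w x ^+ 2 = D%:R * \sum_x w x ^+ 2.
  rewrite mulr_sumr; apply: eq_bigr => x _.
  by rewrite sumr_const card_ord mulr_natl.
have e2 : \sum_x \sum_(i < D) w (flip x i) ^+ 2 = D%:R * \sum_x w x ^+ 2.
  rewrite exchange_big /=.
  have r : forall i, \sum_x w (flip x i) ^+ 2 = \sum_x w x ^+ 2.
    by move=> i; rewrite [RHS](reindex_inj (inj i)).
  under eq_bigr => i _ do rewrite r.
  by rewrite sumr_const card_ord mulr_natl.
have e3 : \sum_x \sum_(i < D) w x * w (flip x i) = D%:R * \sum_x w x ^+ 2.
  rewrite mulr_sumr; apply: eq_bigr => x _.
  by rewrite -mulr_sumr hE mulrCA expr2.
have Hs : \sum_x \sum_(i < D) (w x - w (flip x i)) ^+ 2 = 0.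
  have -> : \sum_x \sum_(i < D) (w x - w (flip x i)) ^+ 2 =
     \sum_x \sum_(i < D) w x ^+ 2 + \sum_x \sum_(i < D) w (flip x i) ^+ 2
     - (\sum_x \sum_(i < D) w x * w (flip x i)) *+ 2.
    rewrite -sumrMnl -big_split -sumrB /=; apply: eq_bigr => x _.
    rewrite -sumrMnl -big_split -sumrB /=; apply: eq_bigr => i _.
    by rewrite sqrrB addrAC.
  by rewrite e1 e2 e3 mulr2n subrr.
move=> x i.
have Hx : \sum_(i < D) (w x - w (flip x i)) ^+ 2 = 0.
  by move/psumr_eq0P: Hs => -> // y _; apply: sumr_ge0 => j _; apply: sqr_ge0.
have : (w x - w (flip x i)) ^+ 2 = 0.
  by move/psumr_eq0P: Hx => -> // j _; apply: sqr_ge0.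
by move/eqP; rewrite sqrf_eq0 subr_eq0 => /eqP ->.
Qed.

Lemma capplyM (R : realType) D (M N : cmat R D) (v : cvec R D) :
  capply M (capply N v) = capply (cmul M N) v.
Proof.
apply: functional_extensionality => x; rewrite /capply /cmul.
under eq_bigr do rewrite mulr_sumr.
rewrite exchange_big /=; apply: eq_bigr => z _.
by rewrite mulr_suml; apply: eq_bigr => y _; rewrite mulrA.
Qed.

Theorem lemma9p1 (R : realType) (D : nat) (hD : (1 <= D)%N)
  (B : cmat R D) (hB : A_like B) (hBa : antisym B)
  (v : cvec R D) (hv : in_E0 v) :
  capply B v = fun _ => 0.
Proof.
set u := capply B v.
have hu : in_E0 u.
  rewrite /in_E0 /u capplyM -(proj1 hB) -capplyM hv.
  apply: functional_extensionality => x; rewrite /capply mulr_sumr.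
  by apply: eq_bigr => y _; rewrite mulrCA.
have key : forall x y, B x y * (u y * v x) = B x y * (u x * v y).
  move=> x y; case: (eqVneq x y) => [->//|nxy].
  case: (boolP (cube_adj x y)) => [/adj_flip [i ->]|nadj].
    by rewrite (E0_edge hu) (E0_edge hv).
  by rewrite (proj2 hB x y nxy nadj) !mul0r.
set S := \sum_x \sum_y B x y * (u x * v y).
have hS : S = - S.
  rewrite {1}/S exchange_big /= /S -sumrN; apply: eq_bigr => y _.
  rewrite -sumrN; apply: eq_bigr => x _.
  by rewrite [B y x]hBa mulNr opprK key.
have S0 : S = 0 by lra.
have Hu : \sum_x u x ^+ 2 = S.
  rewrite /S; apply: eq_bigr => x _.
  rewrite expr2 {2}/u /capply mulr_sumr; apply: eq_bigr => y _.
  by rewrite mulrCA.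
apply: functional_extensionality => x; rewrite -/u.
have : u x ^+ 2 = 0.
  by rewrite S0 in Hu; move/psumr_eq0P: Hu => -> // j _; apply: sqr_ge0.
by move/eqP; rewrite sqrf_eq0 => /eqP.
Qed.
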